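(* In the setting below, any two correct non-sink members are intertwined: for all correct $i',j'\in\Pi\setminus V_{\mathit{sink}}$, every quorum $Q$ of $i'$ and every quorum $Q'$ of $j'$ satisfy $|Q\cap Q'|>f$.
   Context: Processes and faults: $\Pi$ is a finite set of processes, $f\ge0$ a known integer; $W\subseteq\Pi$ is the set of correct processes and $F=\Pi\setminus W$ the Byzantine faulty processes, $|F|\le f$. Faulty processes may declare arbitrary slices. Slices and quorums: each process $i$ has a set $\mathcal{S}_i$ of slices (subsets of $\Pi$). $Q\subseteq\Pi$ is a quorum if every $i\in Q$ has some $S\in\mathcal{S}_i$ with $S\subseteq Q$; a quorum of $i$ is a quorum containing $i$. Two correct processes $i,j$ are intertwined if $|Q\cap Q'|>f$ for every quorum $Q$ of $i$ and every quorum $Q'$ of $j$. Knowledge graph: each process $i$ is given $\mathit{PD}_i\subseteq\Pi$; $G_{\mathit{di}}$ is the directed graph on $\Pi$ with edge $(i,j)$ iff $j\in\mathit{PD}_i$. A sink component is a strongly connected component of $G_{\mathit{di}}$ from which no path leads outside it. A directed graph is $k$-OSR if (1) its underlying undirected graph is connected; (2) its condensation into strongly connected components has exactly one sink $G_{\mathit{sink}}$; (3) $G_{\mathit{sink}}$ is $k$-strongly connected (every ordered pair of its nodes joined by $k$ node-disjoint directed paths); (4) from every node outside $G_{\mathit{sink}}$ to every node in it there are at least $k$ node-disjoint directed paths. Standing assumption: $G_{\mathit{di}}$ has a unique sink component with vertex set $V_{\mathit{sink}}$, which contains at least $2f+1$ correct processes, and the graph obtained from $G_{\mathit{di}}$ by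 deleting $F$ is $(f+1)$-OSR. Slice construction: let $m=\lceil (|V_{\mathit{sink}}|+f+1)/2\rceil$. Every correct $i\in V_{\mathit{sink}}$ has $\mathcal{S}_i=\{S\subseteq V_{\mathit{sink}}: |S|=m\}$. Every correct $i\notin V_{\mathit{sink}}$ is given a set $V_i\subseteq V_{\mathit{sink}}$ containing at least $f+1$ correct members of $V_{\mathit{sink}}$, and has $\mathcal{S}_i=\{S\subseteq V_i: |S|=f+1\}$. *)

(* Defs.v *)
From mathcomp Require Import all_boot.
Set Implicit Arguments. Unset Strict Implicit. Unset Printing Implicit Defensive.

Section Defs.
Variable T : finType.

Definition is_quorum (slices : T -> {set {set T}}) (Q : {set T}) : Prop :=
  forall i, i \in Q -> exists2 S, S \in slices i & S \subset Q.

Definition intertwined (slices : T -> {set {set T}}) (f : nat) (i j : T) : Prop :=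
  forall Q Q' : {set T}, is_quorum slices Q -> i \in Q ->
    is_quorum slices Q' -> j \in Q' -> f < #|Q :&: Q'|.

Definition restr (V : {set T}) (e : rel T) : rel T :=
  [rel x y | [&& x \in V, y \in V & e x y]].

Definition reach (V : {set T}) (e : rel T) (x y : T) : bool :=
  connect (restr V e) x y.

Definition is_scc (V : {set T}) (e : rel T) (C : {set T}) : Prop :=
  [/\ C \subset V, C != set0,
      (forall x y, x \in C -> y \in C -> reach V e x y) &
      (forall x y, x \in C -> y \in V -> reach V e x y -> reach V e y x -> y \in C)].

Definition is_sink_comp (V : {set T}) (e : rel T) (C : {set T}) : Prop :=
  is_scc V e C /\ (forall x y, x \in C -> y \in V -> e x y -> y \in C).

Definition weakly_connected (V : {set T}) (e : rel T) : Prop :=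
  forall x y, x \in V -> y \in V ->
    connect (restr V (fun a b => e a b || e b a)) x y.

(* p (a sequence of vertices after x) is a directed path from x to y in (V, e) *)
Definition is_dpath (V : {set T}) (e : rel T) (x y : T) (p : seq T) : bool :=
  [&& x \in V, path (restr V e) x p & last x p == y].

(* interior vertices of the path x :: p that ends at last x p:
   all vertices of p except the final one *)
Definition interior (p : seq T) : seq T := take (size p).-1 p.

(* there are at least k node-disjoint (i.e. pairwise distinct, internally
   vertex-disjoint) directed paths from x to y in (V, e) *)
Definition k_disjoint_paths (V : {set T}) (e : rel T) (k : nat) (x y : T) : Prop :=
  exists ps : seq (seq T),
    [/\ size ps = k, uniq ps,
        (forall p, p \in ps -> is_dpath V e x y p) &
        (forall i j, i < size ps -> j < size ps -> i != j ->
           forall v, v \in interior (nth [::] ps i) -> v \notin interior (nth [::] ps j))].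

Definition k_strongly_connected (V : {set T}) (e : rel T) (k : nat) : Prop :=
  forall x y, x \in V -> y \in V -> x != y -> k_disjoint_paths V e k x y.

Definition k_OSR (V : {set T}) (e : rel T) (k : nat) : Prop :=
  weakly_connected V e /\
  exists Gs : {set T},
    [/\ is_sink_comp V e Gs,
        (forall C, is_sink_comp V e C -> C = Gs),
        k_strongly_connected Gs e k &
        (forall x y, x \in V -> x \notin Gs -> y \in Gs -> k_disjoint_paths V e k x y)].

End Defs.

Definition Gdi (T : finType) (PD : T -> {set T}) : rel T :=
  [rel i j | j \in PD i].

(* m = ceil((|V_sink| + f + 1) / 2) *)
Definition msize (nsink f : nat) : nat := (nsink + f + 2) %/ 2.

(* Main.v *)
Require Import Defs.
From mathcomp Require Import all_boot.
From mathcomp Require Import zify.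

Theorem lemma5 (T : finType) (f : nat) (F : {set T})
  (slices : T -> {set {set T}}) (PD : T -> {set T})
  (Vsink : {set T}) (Vi : T -> {set T})
  (hF : #|F| <= f)
  (hsink : is_sink_comp [set: T] (Gdi PD) Vsink)
  (hsink_uniq : forall C, is_sink_comp [set: T] (Gdi PD) C -> C = Vsink)
  (hcorr : 2 * f + 1 <= #|Vsink :\: F|)
  (hosr : k_OSR (~: F) (Gdi PD) f.+1)
  (hslS : forall i, i \notin F -> i \in Vsink ->
     slices i = [set S : {set T} | (S \subset Vsink) && (#|S| == msize #|Vsink| f)])
  (hVi : forall i, i \notin F -> i \notin Vsink ->
     Vi i \subset Vsink /\ f + 1 <= #|Vi i :\: F|)
  (hslN : forall i, i \notin F -> i \notin Vsink ->
     slices i = [set S : {set T} | (S \subset Vi i) && (#|S| == f + 1)]) :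
  forall i' j', i' \notin F -> j' \notin F -> i' \notin Vsink -> j' \notin Vsink ->
    intertwined slices f i' j'.
Proof.
have key : forall Q i, is_quorum slices Q -> i \in Q -> i \notin F -> i \notin Vsink ->
  exists2 A : {set T}, A \subset Q :&: Vsink & #|A| = msize #|Vsink| f.
  move=> Q i hQ iQ iF iV.
  have [S] := hQ i iQ.
  rewrite hslN // inE => /andP [SV /eqP Sc] SQ.
  have [SVs _] := hVi i iF iV.
  have : 0 < #|S :\: F|.
    rewrite cardsD.
    have := subset_leq_card (subsetIr S F). lia.
  case/card_gt0P => k; rewrite inE => /andP [kF kS].
  have kV : k \in Vsink by apply: (subsetP SVs); apply: (subsetP SV).
  have kQ : k \in Q by apply: (subsetP SQ).
  have [A] := hQ k kQ.
  rewrite hslS // inE => /andP [AV /eqP Ac] AQ.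
  exists A => //.
  by rewrite subsetI AQ AV.
move=> i' j' iF jF iV jV Q Q' hQ iQ hQ' jQ'.
have [A AQ Ac] := key Q i' hQ iQ iF iV.
have [B BQ Bc] := key Q' j' hQ' jQ' jF jV.
have AV : A \subset Vsink by apply: subset_trans AQ (subsetIr _ _).
have BV : B \subset Vsink by apply: subset_trans BQ (subsetIr _ _).
have AQ1 : A \subset Q by apply: subset_trans AQ (subsetIl _ _).
have BQ1 : B \subset Q' by apply: subset_trans BQ (subsetIl _ _).
have hU : #|A :|: B| <= #|Vsink| by apply: subset_leq_card; rewrite subUset AV BV.
have hUI := cardsUI A B.
have hI : #|A :&: B| <= #|Q :&: Q'| by apply: subset_leq_card; apply: setISS.
have hVF : #|Vsink :\: F| <= #|Vsink| by apply: subset_leq_card; apply: subsetDl.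
move: Ac Bc; rewrite /msize => Ac Bc.
have hd := divn_eq (#|Vsink| + f + 2) 2. have hm := ltn_pmod (#|Vsink| + f + 2) (isT : 0 < 2).
set d := (_ %/ 2) in Ac Bc hd. set r := (_ %% 2) in hd hm. rewrite Ac Bc in hUI. lia.
Qed.
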